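(* Let $\Gamma$ be a gain operator on $\ell^\infty_+(\mathcal I)$. If $\Sigma(\Gamma)$ is GATT, then $\Gamma$ satisfies the uniform NJI condition.
   Context: Let $\mathcal I$ be a nonempty countable index set; $\ell^\infty_+(\mathcal I)$ is the cone of nonnegative real families $s=(s_i)_{i\in\mathcal I}$ with $\|s\|:=\sup_i|s_i|<\infty$, ordered componentwise. $\mathcal K_\infty$: continuous strictly increasing unbounded $\gamma:\mathbb R_+\to\mathbb R_+$ with $\gamma(0)=0$. For $\mathcal J\subset\mathcal I$, $s_{|\mathcal J}$ agrees with $s$ on $\mathcal J$ and is $0$ elsewhere. Gain operator: for each $i$ a finite (possibly empty) $\mathcal I_i\subset\mathcal I\setminus\{i\}$; directed graph $\mathcal G$ with vertices $\mathcal I$ and edges $ji$, $j\in\mathcal I_i$; a pointwise equicontinuous family $\gamma_{ij}\in\mathcal K_\infty$ ($ji\in E(\mathcal G)$); functions $\mu_i:\ell^\infty_+(\mathcal I)\to[0,\infty]$ with (M1) some $\xi\in\mathcal K_\infty$ has $\mu_i(0)=0$, $\mu_i(s)\ge\xi(\|s\|)$; (M2) $\mu_i$ monotone; (M3) for each finite $\mathcal J$, $\mu_i$ restricted to vectors vanishing off $\mathcal J$ is finite-valued and continuous; (M4) for each norm-bounded $A$ and $\varepsilon>0$ there is $\delta>0$ with $\sup_i|\mu_i(s_{|\mathcal I_i})-\mu_i(s^0_{|\mathcal I_i})|\le\varepsilon$ whenever $s^0\in A$, $\|s-s^0\|\le\delta$. $\Gamma_i(s):=\mu_i([\gamma_{ij}(s_j)]_{j\in\mathcal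 I_i})$ (argument zero outside $\mathcal I_i$). $\mathcal N^-_i(n)$: vertices $j$ with a directed path from $j$ to $i$ of length at most $n$ ($\mathcal N^-_i(0)=\{i\}$). $\Sigma(\Gamma)$ is the system $s^{n+1}=\Gamma(s^n)$; it is GATT if $\|\Gamma^n(s)\|\to0$ for every $s\in\ell^\infty_+(\mathcal I)$. Uniform NJI condition: for all $r,\varepsilon>0$ there are $n\in\mathbb N$, $\delta>0$ such that for all $s\in\ell^\infty_+(\mathcal I)$, $i\in\mathcal I$ with $s_i\ge\varepsilon$ and $\|s\|\le r$ there is $j\in\mathcal N^-_i(n)$ with $s_j\ge\delta$ and $\Gamma_j(s)<s_j$. *)

(* Defs.v *)
From HB Require Import structures.
From mathcomp Require Import all_boot all_order all_algebra.
From mathcomp Require Import all_classical all_reals all_analysis.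
Set Implicit Arguments. Unset Strict Implicit. Unset Printing Implicit Defensive.
Import Order.TTheory GRing.Theory Num.Theory.
Import numFieldNormedType.Exports.
Local Open Scope classical_set_scope.
Local Open Scope ring_scope.

Definition is_lplus {R : realType} {I : Type} (s : I -> R) : Prop :=
  (forall i, 0 <= s i) /\ exists M : R, forall i, s i <= M.

Definition linf_norm {R : realType} {I : Type} (s : I -> R) : R :=
  sup (range (fun i => `|s i|)).

Definition restr {R : realType} {I : Type} (J : set I) (s : I -> R) : I -> R :=
  fun i => if `[< J i >] then s i else 0.

(* class K_oo (functions R_+ -> R_+, modelled as R -> R, constrained on [0,oo)) *)
Definition Kinf {R : realType} (g : R -> R) : Prop :=
  [/\ g 0 = 0,
      {within [set x : R | 0 <= x], continuous g},
      (forall x y, 0 <= x -> x < y -> g x < g y) &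
      (forall M : R, exists x, 0 <= x /\ M < g x)].

Definition gainvec {R : realType} {I : Type} (Ii : I -> set I)
  (gam : I -> I -> R -> R) (i : I) (s : I -> R) : I -> R :=
  fun j => if `[< Ii i j >] then gam i j (s j) else 0.

(* Gamma_i(s) := mu_i([gamma_ij(s_j)]_{j in I_i}); finite by (M3) *)
Definition Gam {R : realType} {I : Type} (Ii : I -> set I)
  (gam : I -> I -> R -> R) (mu : I -> (I -> R) -> \bar R) (s : I -> R) : I -> R :=
  fun i => fine (mu i (gainvec Ii gam i s)).

Record gain_operator {R : realType} {I : Type} (Ii : I -> set I)
  (gam : I -> I -> R -> R) (mu : I -> (I -> R) -> \bar R) : Prop := {
  go_fin : forall i, finite_set (Ii i) /\ ~ Ii i i;
  go_Kinf : forall i j, Ii i j -> Kinf (gam i j);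
  go_equicont : forall r : R, 0 <= r -> forall e : R, 0 < e ->
     exists d : R, 0 < d /\ forall i j, Ii i j -> forall x : R, 0 <= x ->
       `|x - r| < d -> `|gam i j x - gam i j r| < e;
  go_M1 : exists xi : R -> R, Kinf xi /\ forall i,
     mu i (fun _ => 0) = 0%E /\
     forall s, is_lplus s -> ((xi (linf_norm s))%:E <= mu i s)%E;
  go_M2 : forall i s s', is_lplus s -> is_lplus s' ->
     (forall j, s j <= s' j) -> (mu i s <= mu i s')%E;
  go_M3 : forall i (J : set I), finite_set J ->
     forall s, is_lplus s -> (forall j, ~ J j -> s j = 0) ->
       mu i s \is a fin_num /\
       forall e : R, 0 < e -> exists d : R, 0 < d /\
         forall s', is_lplus s' -> (forall j, ~ J j -> s' j = 0) ->
           linf_norm (fun j => s' j - s j) < d ->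
           `|fine (mu i s') - fine (mu i s)| < e;
  go_M4 : forall A : set (I -> R), A `<=` [set s | is_lplus s] ->
     (exists r : R, forall s0, A s0 -> linf_norm s0 <= r) ->
     forall e : R, 0 < e -> exists d : R, 0 < d /\
       forall s0 s, A s0 -> is_lplus s -> linf_norm (fun j => s j - s0 j) <= d ->
       forall i, (`|mu i (restr (Ii i) s) - mu i (restr (Ii i) s0)| <= e%:E)%E
}.

(* N^-_i(n): vertices j with a directed path j -> ... -> i of length <= n;
   edge j -> k iff j \in I_k *)
Fixpoint Nin {I : Type} (Ii : I -> set I) (n : nat) (i : I) : set I :=
  match n with
  | O => [set i]
  | S m => Nin Ii m i `|` [set j | exists k, Nin Ii m i k /\ Ii k j]
  end.

Definition GATT {R : realType} {I : Type} (G : (I -> R) -> (I -> R)) : Prop :=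
  forall s, is_lplus s -> (fun n : nat => linf_norm (iter n G s)) @ \oo --> (0 : R).

Definition uniform_NJI {R : realType} {I : Type} (Ii : I -> set I)
  (G : (I -> R) -> (I -> R)) : Prop :=
  forall r eps : R, 0 < r -> 0 < eps ->
  exists (n : nat) (delta : R), 0 < delta /\
    forall s, is_lplus s -> forall i, eps <= s i -> linf_norm s <= r ->
      exists j, Nin Ii n i j /\ delta <= s j /\ G s j < s j.

(* Main.v *)
Require Import Defs.
From HB Require Import structures.
From mathcomp Require Import all_boot all_order all_algebra.
From mathcomp Require Import all_classical all_reals all_analysis.
From mathcomp Require Import finmap.
Set Implicit Arguments. Unset Strict Implicit. Unset Printing Implicit Defensive.
Import Order.TTheory GRing.Theory Num.Theory.
Import numFieldNormedType.Exports.
Local Open Scope classical_set_scope.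
Local Open Scope ring_scope.

Lemma norm_ge (R : realType) (I : Type) (s : I -> R) j :
  is_lplus s -> s j <= linf_norm s.
Proof.
move=> [s0 [M sM]]; rewrite /linf_norm.
have -> : s j = `|s j| by rewrite ger0_norm.
apply: ub_le_sup; last by exists j.
by exists M => _ [k _ <-]; rewrite ger0_norm.
Qed.

Lemma norm_le (R : realType) (I : Type) (s : I -> R) c :
  inhabited I -> (forall j, `|s j| <= c) -> linf_norm s <= c.
Proof.
move=> [i0] H; apply: ge_sup; first by exists `|s i0|, i0.
by move=> _ [k _ <-].
Qed.

Lemma fin_bound (R : realType) (I : choiceType) (S : set I) (f : I -> R) :
  finite_set S -> exists M, forall j, S j -> f j <= M.
Proof.
move=> /finite_fsetP [X ->]; exists (\sum_(j <- X) `|f j|) => j /= jX.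
rewrite (big_rem j) //=; apply: le_trans (real_ler_norm _) _; first by apply: num_real.
rewrite lerDl; apply: sumr_ge0 => *; exact: normr_ge0.
Qed.

Lemma minseq_pos (R : realType) (s : seq R) (g : R -> R) :
  (forall x, x \in s -> 0 < g x) ->
  0 < \big[Order.min/1]_(x <- s) g x /\
  forall x, x \in s -> \big[Order.min/1]_(y <- s) g y <= g x.
Proof.
elim: s => [|a s IH] H; first by rewrite big_nil.
have [IH1 IH2] := IH (fun x xs => H x (mem_behead (s:=a::s) xs)).
rewrite big_cons; split; first by rewrite lt_min H ?mem_head.
move=> x; rewrite inE => /orP [/eqP ->|xs]; first by rewrite ge_min lexx.
by rewrite ge_min IH2 ?orbT.
Qed.

Lemma unif_eq (R : realType) (T : Type) (F : T -> R -> R) (P : T -> Prop) :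
  (forall r, 0 <= r -> forall e, 0 < e -> exists d, 0 < d /\
     forall t, P t -> forall x, 0 <= x -> `|x - r| < d -> `|F t x - F t r| < e) ->
  forall B e, 0 < e -> exists d, 0 < d /\ forall t, P t -> forall x y,
    0 <= x -> x <= B -> 0 <= y -> `|x - y| < d -> `|F t x - F t y| < e.
Proof.
move=> H B e e0.
have : forall r, exists d, 0 < d /\ (0 <= r -> forall t, P t -> forall x, 0 <= x ->
    `|x - r| < d -> `|F t x - F t r| < e / 2).
  move=> r; case: (pselect (0 <= r)) => [r0|nr]; last by exists 1.
  have [d [d0 Hd]] := H r r0 (e / 2) (divr_gt0 e0 (ltr0Sn _ 1)).
  by exists d.
case/choice => d Hd.
have cc : cover_compact `[0, B] by rewrite -compact_cover; exact: segment_compact.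
have [] := cc R [set r : R | 0 <= r] (fun r => ball r (d r / 2)).
- by move=> i _; apply: ball_open.
- move=> x; rewrite /= in_itv /= => /andP [x0 _]; exists x => //; apply: ballxx.
  by apply: divr_gt0; [case: (Hd x)|].
move=> D' D'sub Hcov.
have [dpos dle] := minseq_pos (s := D') (g := fun r => d r / 2)
   (fun x _ => divr_gt0 (proj1 (Hd x)) (ltr0Sn _ 1)).
exists (\big[Order.min/1]_(x <- D') (d x / 2)); split => // t Pt x y x0 xB y0 xy.
have [r rD' xr] : cover [set` D'] (fun r => ball r (d r / 2)) x.
  by apply: Hcov; rewrite /= in_itv /= x0 xB.
have /set_mem r0 := D'sub r rD'.
move: xr; rewrite /ball /= => rx.
have [dr0 Hdr] := Hd r.
have dle' := dle r rD'.
have h1 : `|x - r| < d r.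
  rewrite distrC; apply: lt_le_trans rx _; rewrite ler_pdivrMr //.
  by rewrite ler_peMr ?ler1n // ltW.
have h2 : `|y - r| < d r.
  apply: le_lt_trans (ler_distD x y r) _; rewrite distrC.
  have -> : d r = d r / 2 + d r / 2 by rewrite -splitr.
  apply: ltrD; first by apply: lt_le_trans xy dle'.
  by rewrite distrC.
have := Hdr r0 t Pt x x0 h1; have := Hdr r0 t Pt y y0 h2.
move=> a b; apply: le_lt_trans (ler_distD (F t r) _ _) _.
rewrite (splitr e) distrC; apply: ltrD; by rewrite distrC.
Qed.

Lemma chain_bound (R : realType) (Rb h : R) : 0 < h -> 0 <= Rb ->
  exists N : R, forall f : R -> R, f 0 <= 0 ->
   (forall x y, 0 <= y -> y <= x -> x <= Rb -> x - y <= h -> f x <= f y + 1) ->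
   forall x, 0 <= x -> x <= Rb -> f x <= N.
Proof.
move=> h0 Rb0.
have key : forall f : R -> R, f 0 <= 0 ->
   (forall x y, 0 <= y -> y <= x -> x <= Rb -> x - y <= h -> f x <= f y + 1) ->
   forall n : nat, forall x, 0 <= x -> x <= Rb -> x <= n%:R * h -> f x <= n%:R.
  move=> f f0 Hf; elim => [|n IH] x x0 xR xn.
    by have -> : x = 0 by apply/eqP; rewrite eq_le x0 andbT -(mul0r h).
  have [xh|xh] := lerP x h.
    apply: le_trans (Hf x 0 (lexx _) x0 xR _) _; first by rewrite subr0.
    by rewrite -natr1 lerD2r (le_trans f0).
  apply: le_trans (Hf x (x - h) _ _ xR _) _.
  - by rewrite subr_ge0 ltW.
  - by rewrite lerBlDr lerDl ltW.
  - by rewrite opprB addrC subrK.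
  rewrite -natr1 lerD2r; apply: IH.
  - by rewrite subr_ge0 ltW.
  - by rewrite lerBlDr (le_trans xR) // lerDl ltW.
  - by rewrite lerBlDr -[X in _ + X]mul1r -mulrDl natr1.
exists (Num.Def.archi_bound (Rb / h))%:R => f f0 Hf x x0 xR.
apply: (key f f0 Hf) => //; apply: le_trans xR _.
rewrite -ler_pdivrMr //; apply: ltW; apply: archi_boundP.
by rewrite divr_ge0 // ltW.
Qed.

Section Main.
Variables (R : realType) (I : countType) (Ii : I -> set I)
  (gam : I -> I -> R -> R) (mu : I -> (I -> R) -> \bar R).
Hypothesis inh : inhabited I.
Hypothesis HG : gain_operator Ii gam mu.
Local Notation G := (Gam Ii gam mu).

Definition nonneg (s : I -> R) := forall j, 0 <= s j.

Lemma gam0 i j : Ii i j -> gam i j 0 = 0.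
Proof. by move=> e; case: (go_Kinf HG e). Qed.

Lemma gam_le i j x y : Ii i j -> 0 <= x -> x <= y -> gam i j x <= gam i j y.
Proof.
move=> e x0; rewrite le_eqVlt => /orP [/eqP ->//|xy].
by case: (go_Kinf HG e) => _ _ H _; apply/ltW/H.
Qed.

Lemma gam_ge0 i j x : Ii i j -> 0 <= x -> 0 <= gam i j x.
Proof. by move=> e x0; rewrite -(gam0 e); apply: gam_le. Qed.

Lemma gainvec_ge0 j x : nonneg x -> nonneg (gainvec Ii gam j x).
Proof.
move=> x0 k; rewrite /gainvec; case: asboolP => // e; exact: gam_ge0.
Qed.

Lemma gainvec_lplus j x : nonneg x -> is_lplus (gainvec Ii gam j x).
Proof.
move=> x0; split; first exact: gainvec_ge0.
have [M HM] := fin_bound (fun k => gam j k (x k)) (proj1 (go_fin HG j)).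
exists (Num.max M 0) => k; rewrite /gainvec le_max; case: asboolP => e.
  by rewrite HM.
by rewrite lexx orbT.
Qed.

Lemma gainvec_off j x k : ~ Ii j k -> gainvec Ii gam j x k = 0.
Proof. by rewrite /gainvec; case: asboolP. Qed.

Lemma mu_fin j x : nonneg x -> mu j (gainvec Ii gam j x) \is a fin_num.
Proof.
move=> x0; have [] := go_M3 HG j (proj1 (go_fin HG j)) (gainvec_lplus j x0).
  by move=> k; apply: gainvec_off.
done.
Qed.

Lemma zero_lplus : is_lplus (fun _ : I => (0 : R)).
Proof. by split => //; exists 0. Qed.

Lemma mu_ge0 j x : nonneg x -> (0 <= mu j (gainvec Ii gam j x))%E.
Proof.
move=> x0; have [xi [_ Hxi]] := go_M1 HG.
rewrite -(proj1 (Hxi j)); apply: (go_M2 HG) => //.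
- exact: zero_lplus.
- exact: gainvec_lplus.
- by move=> k; apply: gainvec_ge0.
Qed.

Lemma G_ge0 x j : nonneg x -> 0 <= G x j.
Proof. by move=> x0; apply: fine_ge0; apply: mu_ge0. Qed.

Lemma G_mono x y j : nonneg x -> (forall k, x k <= y k) -> G x j <= G y j.
Proof.
move=> x0 xy; have y0 : nonneg y by move=> k; apply: le_trans (xy k).
apply: fine_le; try exact: mu_fin.
apply: (go_M2 HG); try exact: gainvec_lplus.
move=> k; rewrite /gainvec; case: asboolP => // e; apply: gam_le => //.
Qed.

Lemma G_restr x j : G x j = G (restr (Ii j) x) j.
Proof.
rewrite /Gam; congr (fine (mu j _)); apply: funext => k.
by rewrite /gainvec /restr; case: asboolP.
Qed.

Lemma restr_gainvec j x : restr (Ii j) (gainvec Ii gam j x) = gainvec Ii gam j x.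
Proof. by apply: funext => k; rewrite /gainvec /restr; case: asboolP. Qed.

Lemma G0 j : G (fun _ => 0) j = 0.
Proof.
rewrite /Gam; have -> : gainvec Ii gam j (fun _ => 0) = (fun _ => 0).
  by apply: funext => k; rewrite /gainvec; case: asboolP => // e; apply: gam0.
by have [xi [_ Hxi]] := go_M1 HG; rewrite (proj1 (Hxi j)).
Qed.


Lemma gam_unif Rb e : 0 < e -> exists d, 0 < d /\ forall i j, Ii i j -> forall x y,
    0 <= x -> x <= Rb -> 0 <= y -> `|x - y| < d -> `|gam i j x - gam i j y| < e.
Proof.
move=> e0.
have H : forall r : R, 0 <= r -> forall e' : R, 0 < e' -> exists d : R, 0 < d /\
   forall t : I * I, Ii t.1 t.2 -> forall x, 0 <= x -> `|x - r| < d ->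
     `|gam t.1 t.2 x - gam t.1 t.2 r| < e'.
  move=> r r0 e' e'0; have [d [d0 Hd]] := go_equicont HG r0 e'0.
  by exists d; split => // [[i j]] /= e1 x x0 xr; apply: Hd.
have [d [d0' Hd]] := unif_eq H Rb e0.
exists d; split => // i j e1 x y x0 xR y0 xy.
exact: (Hd (i, j)).
Qed.

Lemma gam_bound Rb : 0 <= Rb -> exists B, 0 <= B /\ forall i j, Ii i j ->
   forall x, 0 <= x -> x <= Rb -> gam i j x <= B.
Proof.
move=> Rb0; have [d [d0 Hd]] := gam_unif Rb (ltr01 : (0:R) < 1).
have h0 : 0 < d / 2 by apply: divr_gt0.
have [N HN] := chain_bound h0 Rb0.
exists (Num.max N 0); split; first by rewrite le_max lexx orbT.
move=> i j e x x0 xR; rewrite le_max; apply/orP; left.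
apply: (HN (gam i j)) => //; first by rewrite gam0.
move=> u v v0 vu uR uv.
have u0 : 0 <= u by apply: le_trans vu.
have := Hd i j e u v u0 uR v0.
have uvd : `|u - v| < d.
  rewrite ger0_norm ?subr_ge0 //; apply: le_lt_trans uv _.
  by rewrite ltr_pdivrMr // ltr_pMr // ltr1n.
move=> /(_ uvd) H; rewrite -lerBlDl; apply: ltW; apply: le_lt_trans H.
exact: ler_norm.
Qed.

Lemma modulus Rb : 0 <= Rb -> forall e, 0 < e -> exists c, 0 < c /\
  forall j x y, nonneg x -> nonneg y -> (forall k, x k <= Rb) ->
   (forall k, `|x k - y k| <= c) -> `|G x j - G y j| <= e.
Proof.
move=> Rb0 e e0.
have [B [B0 HB]] := gam_bound Rb0.
pose A := [set w : I -> R | is_lplus w /\ forall k, w k <= B].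
have Asub : A `<=` [set s | is_lplus s] by move=> w [].
have Abd : exists r : R, forall s0, A s0 -> linf_norm s0 <= r.
  exists B => w [[w0 _] wB]; apply: norm_le => // k.
  by rewrite ger0_norm.
have [d [d0 Hd]] := go_M4 HG Asub Abd e0.
have [c' [c'0 Hc']] := gam_unif Rb d0.
exists (c' / 2); split; first by apply: divr_gt0.
move=> j x y x0 y0 xR xy.
have Ax : A (gainvec Ii gam j x).
  split; first exact: gainvec_lplus.
  move=> k; rewrite /gainvec; case: asboolP => // ek.
  by apply: HB.
have := Hd _ _ Ax (gainvec_lplus j y0).
have Hn : linf_norm (fun k => gainvec Ii gam j y k - gainvec Ii gam j x k) <= d.
  apply: norm_le => // k; rewrite /gainvec; case: asboolP => ek; last first.
    by rewrite subrr normr0 ltW.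
  apply: ltW; rewrite distrC; apply: Hc' => //.
  apply: le_lt_trans (xy k) _.
  by rewrite ltr_pdivrMr // ltr_pMr // ltr1n.
move=> /(_ Hn j); rewrite !restr_gainvec.
rewrite -(fineK (mu_fin j x0)) -(fineK (mu_fin j y0)) -EFinB abse_EFin lee_fin.
by rewrite distrC.
Qed.

Lemma Gbound Rb : 0 <= Rb -> exists M, forall j x, nonneg x ->
   (forall k, x k <= Rb) -> G x j <= M.
Proof.
move=> Rb0; have [c [c0 Hc]] := modulus Rb0 (ltr01 : (0:R) < 1).
have [N HN] := chain_bound c0 Rb0.
exists N => j x x0 xR.
apply: le_trans (G_mono j x0 xR : G x j <= G (fun _ => Rb) j) _.
apply: (HN (fun t => G (fun _ => t) j)) => //; first by rewrite G0.
move=> u v v0 vu uR uv.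
have u0 : 0 <= u by apply: le_trans vu.
have uvc : forall k : I, `|u - v| <= c by move=> _; rewrite ger0_norm ?subr_ge0.
have H := Hc j (fun _ => u) (fun _ => v) (fun _ => u0) (fun _ => v0) (fun _ => uR) uvc.
rewrite -lerBlDl; apply: le_trans H; exact: ler_norm.
Qed.

Lemma G_lplus x : is_lplus x -> is_lplus (G x).
Proof.
move=> [x0 [M HM]]; split; first by move=> j; apply: G_ge0.
have M0 : 0 <= Num.max M 0 by rewrite le_max lexx orbT.
have [B HB] := Gbound M0; exists B => j; apply: HB => // k.
by rewrite le_max HM.
Qed.

Lemma iter_lplus n x : is_lplus x -> is_lplus (iter n G x).
Proof. by move=> xl; elim: n => //= n IH; apply: G_lplus. Qed.

Lemma iter_nonneg n x : nonneg x -> nonneg (iter n G x).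
Proof. by move=> x0; elim: n => //= n IH j; apply: G_ge0. Qed.

Lemma iter_mono n x y : nonneg x -> (forall k, x k <= y k) ->
  forall k, iter n G x k <= iter n G y k.
Proof.
move=> x0 xy; elim: n => //= n IH k; apply: G_mono => //.
exact: iter_nonneg.
Qed.



Lemma Nin_S n i j : Nin Ii n i j -> Nin Ii n.+1 i j.
Proof. by move=> h; left. Qed.

Lemma Nin_mono n m i j : Nin Ii n i j -> Nin Ii (n + m) i j.
Proof.
move=> h; elim: m => [|m IH]; first by rewrite addn0.
by rewrite addnS; apply: Nin_S.
Qed.

Lemma Nin_edge n i j l : Nin Ii n i j -> Ii j l -> Nin Ii n.+1 i l.
Proof. by move=> h e; right; exists j. Qed.

Lemma chain r : 0 <= r -> forall m e, 0 < e -> exists delta, 0 < delta /\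
  forall s, nonneg s -> (forall k, s k <= r) -> forall n i,
   (forall j, Nin Ii (n + m) i j -> delta <= s j -> s j <= G s j) ->
   forall j, Nin Ii n i j -> s j - e <= iter m G s j.
Proof.
move=> r0; elim => [|m IH] e e0.
  exists 1; split => // s s0 sr n i _ j _ /=.
  by rewrite lerBlDr lerDl ltW.
have e20 : 0 < e / 2 by apply: divr_gt0.
have [c [c0 Hc]] := modulus r0 e20.
have [d' [d'0 Hd']] := IH c c0.
exists (Num.min d' e); split; first by rewrite lt_min d'0 e0.
move=> s s0 sr n i Hyp j jn.
have IHc : forall l, Nin Ii n.+1 i l -> s l - c <= iter m G s l.
  apply: Hd' => // l; rewrite addSnnS => ln dl; apply: Hyp => //.
  by rewrite ge_min dl.
have itn := iter_nonneg m s0.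
rewrite iterS.
have [sjd|dsj] := ltrP (s j) (Num.min d' e).
  apply: le_trans (G_ge0 j itn).
  rewrite subr_le0; apply: ltW; apply: lt_le_trans sjd _.
  by rewrite ge_min lexx orbT.
have Hsj : s j <= G s j.
  by apply: Hyp => //; apply: Nin_mono.
pose z := restr (Ii j) (fun l => Num.max (s l - c) 0).
have z0 : nonneg z.
  by move=> l; rewrite /z /restr; case: asboolP => // _; rewrite le_max lexx orbT.
have zle : G z j <= G (iter m G s) j.
  rewrite (G_restr (iter m G s)); apply: G_mono => // l.
  rewrite /z /restr; case: asboolP => // el.
  by rewrite ge_max itn andbT; apply: IHc; apply: Nin_edge el.
have rs0 : nonneg (restr (Ii j) s).
  by move=> l; rewrite /restr; case: asboolP.
have rsr : forall l, restr (Ii j) s l <= r.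
  by move=> l; rewrite /restr; case: asboolP.
have dz : forall l, `|restr (Ii j) s l - z l| <= c.
  move=> l; rewrite /z /restr; case: asboolP => _; last by rewrite subrr normr0 ltW.
  have [h|h] := leP 0 (s l - c).
    by rewrite opprB addrC subrK ger0_norm // ltW.
  rewrite subr0 ger0_norm //; first by move: h; rewrite subr_lt0 => /ltW.
have := Hc j _ _ rs0 z0 rsr dz; rewrite -G_restr => H.
apply: le_trans zle.
have h1 : s j - e <= G s j - e / 2.
  apply: lerB => //; by rewrite ler_pdivrMr // ler_peMr ?ler1n // ltW.
apply: le_trans h1 _.
rewrite lerBlDr -lerBlDl; apply: le_trans (ler_norm _) _.
done.
Qed.

End Main.

Theorem proposition2p19 (R : realType) (I : countType) (Ii : I -> set I)
  (gam : I -> I -> R -> R) (mu : I -> (I -> R) -> \bar R) :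
  inhabited I ->
  gain_operator Ii gam mu ->
  GATT (Gam Ii gam mu) ->
  uniform_NJI Ii (Gam Ii gam mu).
Proof.
move=> inh HG Hgatt r eps r0 eps0.
have e20 : 0 < eps / 2 by apply: divr_gt0.
have rl : is_lplus (fun _ : I => r) by split => [_|]; [exact: ltW | exists r].
have := Hgatt _ rl; move/cvgrPdist_lt => /(_ _ e20) [N _ HN].
have {HN} HN := HN N (leqnn N); rewrite sub0r normrN /= in HN.
have [delta [d0 Hd]] := chain inh HG (ltW r0) N e20.
exists N, delta; split => // s sl i epsi sr.
case: (pselect (exists j, Nin Ii N i j /\ delta <= s j /\ Gam Ii gam mu s j < s j)) => // Hno.
exfalso.
have s0 : nonneg s by case: sl.
have sk : forall k, s k <= r by move=> k; apply: le_trans (norm_ge k sl) sr.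
have Hyp : forall j, Nin Ii (0 + N) i j -> delta <= s j -> s j <= Gam Ii gam mu s j.
  move=> j; rewrite add0n => jn dj; rewrite leNgt; apply/negP => lt.
  by apply: Hno; exists j.
have := Hd s s0 sk 0%N i Hyp i (erefl i).
have h1 : iter N (Gam Ii gam mu) s i <= iter N (Gam Ii gam mu) (fun _ => r) i.
  exact: iter_mono.
have h2 := norm_ge i (iter_lplus inh HG N rl).
have h3 : eps / 2 <= s i - eps / 2.
  by rewrite lerBrDr -splitr.
move=> h4.
have := lt_le_trans (le_lt_trans h2 (le_lt_trans (ler_norm _) HN)) (le_trans h3 (le_trans h4 h1)).
by rewrite ltxx.
Qed.
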